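(* Let $a,b$ be positive integers, and let $m,n$ be coprime positive integers with $\dfrac{\sigma(a)}{\sigma(b)}=\dfrac{m}{n}$. Let $x$ be a positive integer such that $p=nx-1$ and $q=mx-1$ are primes, and let $z$ be a positive integer such that $z,a,p$ are pairwise coprime and $z,b,q$ are pairwise coprime. Then: (i) $zap$ and $zbq$ are amicable if and only if $$\frac{z}{\sigma(z)}=\frac{nx\,\sigma(a)}{(na+mb)x-a-b}.$$ (ii) If $zap$ and $zbq$ are amicable and the fraction $\dfrac{nx\,\sigma(a)}{(na+mb)x-a-b}$ is written in lowest terms as $\dfrac{r}{s}$, then $z$ is deficient ($\sigma(z)<2z$), $r$ divides $z$, $s\ge\sigma(r)$, if $s=\sigma(r)$ then $z=r$, and $r$ is deficient ($\sigma(r)<2r$).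
   Context: For a positive integer $N$, $\sigma(N)$ denotes the sum of all positive divisors of $N$. Positive integers $M,N$ are amicable if $\sigma(M)-M=N$ and $\sigma(N)-N=M$ (equivalently $\sigma(M)=\sigma(N)=M+N$). A positive integer $N$ is deficient if $\sigma(N)<2N$. *)

(* Defs.v *)
From mathcomp Require Import all_boot all_order all_algebra.
Set Implicit Arguments. Unset Strict Implicit. Unset Printing Implicit Defensive.

(* sum of all positive divisors of N (divisors 0 = [::], so sigma 0 = 0) *)
Definition sigma (N : nat) : nat := \sum_(d <- divisors N) d.

Definition amicable (M N : nat) : Prop :=
  sigma M - M = N /\ sigma N - N = M.

Definition deficient (N : nat) : Prop := sigma N < 2 * N.

(* Main.v *)
Require Import Defs.
From mathcomp Require Import all_boot all_order all_algebra.
From mathcomp Require Import zify.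

Lemma sum_subseq (s s' : seq nat) (f : nat -> nat) :
  uniq s -> uniq s' -> {subset s <= s'} ->
  \sum_(i <- s) f i <= \sum_(i <- s') f i.
Proof.
move=> us us' sub.
have P := permEl (perm_filterC (fun x => x \in s) s').
rewrite -(perm_big _ P) big_cat /=.
have -> : \sum_(i <- [seq x <- s' | x \in s]) f i = \sum_(i <- s) f i.
  apply: perm_big; apply: uniq_perm; first exact: filter_uniq.
    done.
  by move=> y; rewrite mem_filter; case: (boolP (y \in s)) => // /sub.
exact: leq_addr.
Qed.

Lemma sigma_ge N : 0 < N -> N <= sigma N.
Proof.
move=> N0; rewrite /sigma.
have := @sum_subseq [:: N] (divisors N) id isT (divisors_uniq N).
rewrite big_seq1; apply => y; rewrite inE => /eqP ->; exact: divisors_id.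
Qed.

Lemma sigma_prime p : prime p -> sigma p = p + 1.
Proof.
move=> pp; rewrite /sigma (@perm_big _ _ _ _ _ [:: 1; p]).
  by rewrite big_cons big_seq1 addnC.
apply: uniq_perm; first exact: divisors_uniq.
  by rewrite /= inE andbT neq_ltn prime_gt1.
move=> d; rewrite -dvdn_divisors ?prime_gt0 // !inE.
case/primeP: pp => p1 H; apply/idP/idP; first exact: H.
by case/orP => /eqP ->; rewrite ?dvd1n ?dvdnn.
Qed.

Lemma sigma_mul u v : coprime u v -> 0 < u -> 0 < v ->
  sigma (u * v) = sigma u * sigma v.
Proof.
rewrite /sigma => cuv u0 v0.
have -> : \sum_(d <- divisors (u*v)) d =
   \sum_(d <- [seq d1 * d2 | d1 <- divisors u, d2 <- divisors v]) d.
  apply: perm_big; apply: uniq_perm.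
  - exact: divisors_uniq.
  - apply: allpairs_uniq; [exact: divisors_uniq | exact: divisors_uniq |].
    move=> [d1 d2] [e1 e2] /allpairsP[[x1 y1] [/= hx1 hy1 [-> ->]]].
    move=> /allpairsP[[x2 y2] [/= hx2 hy2 [-> ->]]] /= E.
    rewrite -!dvdn_divisors // in hx1 hy1 hx2 hy2.
    have g1 : forall x y, x %| u -> y %| v -> gcdn u (x*y) = x.
      move=> x y hx hy; rewrite Gauss_gcdl; last exact: coprime_dvdr hy cuv.
      exact/gcdn_idPr.
    have g2 : forall x y, x %| u -> y %| v -> gcdn v (x*y) = y.
      move=> x y hx hy; rewrite Gauss_gcdr; last first.
        by apply: coprime_dvdr hx _; rewrite coprime_sym.
      exact/gcdn_idPr.
    have E' : x1 * y1 = x2 * y2 := E.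
    have -> : x1 = x2 by rewrite -(g1 x1 y1) // E' g1.
    have -> : y1 = y2 by rewrite -(g2 x1 y1) // E' g2.
    done.
  - move=> d; rewrite -dvdn_divisors ?muln_gt0 ?u0 //.
    apply/idP/allpairsP.
    + move=> hd; exists (gcdn d u, gcdn d v) => /=.
      split; try rewrite -dvdn_divisors //; try exact: dvdn_gcdr.
      apply/eqP; rewrite eqn_dvd; apply/andP; split.
      * suff: gcdn d (u*v) %| gcdn d u * gcdn d v by move/gcdn_idPl: hd => ->.
        rewrite muln_gcdl !muln_gcdr !dvdn_gcd.
        have gd : gcdn d (u*v) %| d := dvdn_gcdl _ _.
        have guv : gcdn d (u*v) %| u * v := dvdn_gcdr _ _.
        by rewrite !(dvdn_mulr _ gd) !(dvdn_mull _ gd) guv.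
      * rewrite Gauss_dvd ?dvdn_gcdl //.
        apply: coprime_dvdl (dvdn_gcdr _ _) _.
        exact: coprime_dvdr (dvdn_gcdr _ _) cuv.
    + move=> [[x y]] /= [hx hy ->]; rewrite -dvdn_divisors // in hx hy.
      by rewrite -dvdn_divisors in hy; [exact: dvdn_mul|].
rewrite big_allpairs_dep /= big_distrl /=; apply: eq_bigr => i _.
by rewrite big_distrr.
Qed.

Lemma sigma_mul_gt t r : 0 < r -> 1 < t -> t * sigma r < sigma (t * r).
Proof.
move=> r0 t1; have t0 : 0 < t by apply: ltn_trans t1.
have := @sum_subseq (1 :: map (muln t) (divisors r)) (divisors (t * r)) id.
rewrite big_cons big_map /= -big_distrr /= add1n; apply.
- rewrite /= map_inj_uniq ?divisors_uniq ?andbT.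
    apply/mapP => -[d _] /esym/eqP; rewrite muln_eq1 => /andP[/eqP t1' _].
    by rewrite t1' in t1.
  by move=> y1 y2 /eqP; rewrite eqn_pmul2l // => /eqP.
- exact: divisors_uniq.
- move=> y; rewrite inE => /orP[/eqP ->|/mapP[d hd ->]]; first exact: divisor1.
  rewrite -dvdn_divisors ?muln_gt0 ?t0 // dvdn_pmul2l //.
  by rewrite dvdn_divisors.
Qed.
Arguments sigma_ge {N}.
Arguments sigma_mul_gt {t r}.
Import GRing.Theory Num.Theory.
Local Open Scope ring_scope.

Lemma ratdiv_eq (x y z t : nat) : (0 < y)%N -> (0 < t)%N ->
  (x%:R / y%:R = z%:R / t%:R :> rat) <-> (x * t = z * y)%N.
Proof.
move=> y0 t0; split => H.
  move/eqP: H; rewrite eqr_div ?pnatr_eq0 -?lt0n // -!natrM eqr_nat.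
  by move/eqP.
apply/eqP; rewrite eqr_div ?pnatr_eq0 -?lt0n // -!natrM eqr_nat H.
by [].
Qed.

Theorem mainTheorem11 (a b m n x z : nat) :
  (0 < a)%N -> (0 < b)%N -> (0 < m)%N -> (0 < n)%N -> coprime m n ->
  (sigma a)%:R / (sigma b)%:R = m%:R / n%:R :> rat ->
  (0 < x)%N -> prime (n * x - 1) -> prime (m * x - 1) ->
  (0 < z)%N ->
  coprime z a -> coprime z (n * x - 1) -> coprime a (n * x - 1) ->
  coprime z b -> coprime z (m * x - 1) -> coprime b (m * x - 1) ->
  let F : rat := (n * x * sigma a)%:R /
                 (((n * a + m * b) * x)%:R - a%:R - b%:R) in
  (amicable (z * a * (n * x - 1)) (z * b * (m * x - 1))
     <-> z%:R / (sigma z)%:R = F)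
  /\
  (amicable (z * a * (n * x - 1)) (z * b * (m * x - 1)) ->
   forall r s : nat, (0 < s)%N -> coprime r s -> r%:R / s%:R = F ->
     [/\ deficient z, (r %| z)%N, (sigma r <= s)%N,
         (s = sigma r -> z = r) & deficient r]).
Proof.
move=> a0 b0 m0 n0 cmn Hsig x0 pp pq z0 cza czp cap czb czq cbq F.
have sa := sigma_ge a0; have sb := sigma_ge b0; have sz := sigma_ge z0.
have Hs : (sigma a * n = m * sigma b)%N.
  by apply/ratdiv_eq => //; lia.
have p1 := prime_gt1 pp; have q1 := prime_gt1 pq.
have SM : sigma (z * a * (n * x - 1)) = (sigma z * (n * x * sigma a))%N.
  rewrite sigma_mul; first last.
  - lia.
  - by rewrite muln_gt0 z0.
  - by rewrite coprimeMl czp cap.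
  rewrite sigma_mul // (sigma_prime _ pp); nia.
have SN : sigma (z * b * (m * x - 1)) = (sigma z * (n * x * sigma a))%N.
  rewrite sigma_mul; first last.
  - lia.
  - by rewrite muln_gt0 z0.
  - by rewrite coprimeMl czq cbq.
  rewrite sigma_mul // (sigma_prime _ pq); nia.
set D := ((n * a + m * b) * x - a - b)%N.
have D0 : (0 < D)%N by rewrite /D; nia.
have MN : (z * a * (n * x - 1) + z * b * (m * x - 1) = z * D)%N.
  rewrite /D; nia.
have Mle : (z * a * (n * x - 1) <= sigma (z * a * (n * x - 1)))%N.
  by apply: sigma_ge; nia.
have Nle : (z * b * (m * x - 1) <= sigma (z * b * (m * x - 1)))%N.
  by apply: sigma_ge; nia.
have AmE : amicable (z * a * (n * x - 1)) (z * b * (m * x - 1)) <->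
           (sigma z * (n * x * sigma a) = z * D)%N.
  rewrite /amicable.
  move: Mle Nle; rewrite SM SN; lia.
have FE : forall u v : nat, (0 < v)%N ->
    (u%:R / v%:R = F <-> (u * D = n * x * sigma a * v)%N).
  move=> u v v0; rewrite /F -natrB; last by nia.
  rewrite -natrB; last by nia.
  exact: ratdiv_eq.
split.
  rewrite AmE FE; last by lia.
  lia.
move=> /AmE E r s s0 crs /FE Hr; move: (Hr s0) => {}Hr.
have ZS : (z * s = sigma z * r)%N.
  apply/eqP; rewrite -(eqn_pmul2r D0); apply/eqP.
  by rewrite mulnAC -E -mulnA -Hr mulnA.
have r0 : (0 < r)%N by nia.
have rz : (r %| z)%N by rewrite -(Gauss_dvdl _ crs) ZS dvdn_mull.
case/dvdnP: rz => t zt.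
have t0 : (0 < t)%N by nia.
have St : sigma z = (t * s)%N.
  apply/eqP; rewrite -(eqn_pmul2r r0); apply/eqP; rewrite -ZS zt; lia.
have DK : (D < 2 * (n * x * sigma a))%N.
  have h1 : (a * (n * x) <= sigma a * (n * x))%N by rewrite leq_mul2r sa orbT.
  have h2 : (b * (m * x) <= sigma b * (m * x))%N by rewrite leq_mul2r sb orbT.
  rewrite /D; nia.
have defz : (sigma z < 2 * z)%N by nia.
have Hsr : (t * sigma r <= t * s)%N /\ (1 < t -> t * sigma r < t * s)%N.
  rewrite -St zt; case: (ltnP 1 t) => t1.
    by have H := sigma_mul_gt r0 t1; split => [|_]; [exact: ltnW|].
  have -> : t = 1%N by lia.
  by rewrite !mul1n.
case: Hsr => Hsr1 Hsr2.
split.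
- by rewrite /deficient.
- by rewrite zt dvdn_mull.
- by rewrite -(leq_pmul2l t0).
- move=> esr; case: (ltnP 1 t) => t1.
    by have := Hsr2 t1; rewrite esr ltnn.
  have t1' : t = 1%N by lia.
  by rewrite zt t1' mul1n.
- rewrite /deficient; nia.
Qed.
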